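(* Let $n\geq 4$ and let $\delta: VT_n\to\mathrm{GL}_{n+1}(\mathbb{C})$ be a homogeneous $3$-local representation of $VT_n$, equivalent to one of the representations $\delta_j$, $1\le j\le 14$, described below. Then: (1) if $\delta$ is equivalent to $\delta_1$ with $e=1$, then $\delta$ is unfaithful; (2) if $\delta$ is equivalent to $\delta_2$ with $e=1$, then $\delta$ is unfaithful; (3) if $\delta$ is equivalent to $\delta_3$ with $d=\frac1p$, then $\delta$ is unfaithful; (4) if $\delta$ is equivalent to $\delta_4$ with $h=\frac1k$, then $\delta$ is unfaithful; (5) if $\delta$ is equivalent to $\delta_j$ for some $5\le j\le 14$, then $\delta$ is unfaithful.
   Context: The virtual twin group $VT_n$ has generators $s_1,\dots,s_{n-1},\rho_1,\dots,\rho_{n-1}$ and defining relations: $s_i^2=1$; $s_is_j=s_js_i$ ($|i-j|\ge2$); $\rho_i\rho_{i+1}\rho_i=\rho_{i+1}\rho_i\rho_{i+1}$ ($1\le i\le n-2$); $\rho_i\rho_j=\rho_j\rho_i$ ($|i-j|\ge2$); $\rho_i^2=1$; $s_i\rho_j=\rho_js_i$ ($|i-j|\ge2$); $\rho_i\rho_{i+1}s_i=s_{i+1}\rho_i\rho_{i+1}$ ($1\le i\le n-2$). A homogeneous $3$-local representation $\delta:VT_n\to\mathrm{GL}_{n+1}(\mathbb{C})$ is one with $\delta(s_i)=\mathrm{diag}(I_{i-1},M,I_{n-i-1})$, $\delta(\rho_i)=\mathrm{diag}(I_{i-1},N,I_{n-i-1})$ for fixed $M,N\in\mathrm{GL}_3(\mathbb{C})$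 (block-diagonal; $I_r$ the $r\times r$ identity). Equivalent means conjugate by an invertible matrix; unfaithful means not injective. The representation $\delta_j$ is the homogeneous $3$-local representation with $(M,N)=(M_j,N_j)$, where ($\mathbb{C}^*=\mathbb{C}\setminus\{0\}$): $M_1=\begin{pmatrix}1&0&0\\0&e&\frac{1-e^2}{h}\\0&h&-e\end{pmatrix}$, $N_1=\begin{pmatrix}1&0&0\\0&0&p\\0&\frac1p&0\end{pmatrix}$ ($e\in\mathbb{C}$, $h,p\in\mathbb{C}^*$); $M_2=\begin{pmatrix}-e&\frac{1-e^2}{d}&0\\d&e&0\\0&0&1\end{pmatrix}$, $N_2=\begin{pmatrix}0&k&0\\\frac1k&0&0\\0&0&1\end{pmatrix}$ ($e\in\mathbb{C}$, $d,k\in\mathbb{C}^*$); $M_3=\begin{pmatrix}1&0&0\\d&-1&2p-dp^2\\0&0&1\end{pmatrix}$, $N_3=\begin{pmatrix}1&0&0\\\frac1p&-1&p\\0&0&1\end{pmatrix}$ ($d\in\mathbb{C}$, $p\in\mathbb{C}^*$); $M_4=\begin{pmatrix}1&2k-hk^2&0\\0&-1&0\\0&h&1\end{pmatrix}$, $N_4=\begin{pmatrix}1&k&0\\0&-1&0\\0&\frac1k&1\end{pmatrix}$ ($h\in\mathbb{C}$, $k\in\mathbb{C}^*$); $M_5=\begin{pmatrix}1&b&0\\0&-1&0\\0&0&1\end{pmatrix}$, $N_5=N_2$ ($b\in\mathbb{C}$, $k\in\mathbb{C}^*$); $M_6=\begin{pmatrix}-1&b&0\\0&1&0\\0&0&1\end{pmatrix}$,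 $N_6=N_2$ ($b\in\mathbb{C}$, $k\in\mathbb{C}^*$); $M_7=I_3$, $N_7=\begin{pmatrix}1&0&0\\\frac1p&-1&p\\0&0&1\end{pmatrix}$ ($p\in\mathbb{C}^*$); $M_8=I_3$, $N_8=\begin{pmatrix}1&k&0\\0&-1&0\\0&\frac1k&1\end{pmatrix}$ ($k\in\mathbb{C}^*$); $M_9=\mathrm{diag}(1,-1,-1)$, $N_9=\begin{pmatrix}1&0&0\\0&0&p\\0&\frac1p&0\end{pmatrix}$ ($p\in\mathbb{C}^*$); $M_{10}=\mathrm{diag}(1,-1,1)$, $N_{10}=N_9$; $M_{11}=I_3$, $N_{11}=N_9$ ($p\in\mathbb{C}^*$); $M_{12}=\mathrm{diag}(-1,-1,1)$, $N_{12}=\begin{pmatrix}0&k&0\\\frac1k&0&0\\0&0&1\end{pmatrix}$; $M_{13}=I_3$, $N_{13}=N_{12}$ ($k\in\mathbb{C}^*$); $M_{14}=N_{14}=I_3$. *)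

(* Defs.v *)
From mathcomp Require Import all_boot all_algebra.
From mathcomp Require Import complex.
From mathcomp Require Import Rstruct.
Set Implicit Arguments. Unset Strict Implicit. Unset Printing Implicit Defensive.
Import GRing.Theory.
Local Open Scope ring_scope.

Definition C : Type := complex Rdefinitions.R.

(* Generators of VT_n:  VTs k = s_(k+1),  VTrho k = rho_(k+1),  k : 'I_(n-1),
   so the index i = k+1 ranges over 1..n-1. *)
Inductive VTgen (n : nat) : Type :=
  | VTs of 'I_n.-1
  | VTrho of 'I_n.-1.

Definition VTrel (n : nat) (T : Type) (mul : T -> T -> T) (one : T)
    (f : VTgen n -> T) : Prop :=
  let far (i j : 'I_n.-1) := ((val i + 2 <= val j) || (val j + 2 <= val i))%N in
  let nxt (i j : 'I_n.-1) := (val j == (val i).+1)%N in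
  (forall i, mul (f (VTs i)) (f (VTs i)) = one) /\
  (forall i j, far i j -> mul (f (VTs i)) (f (VTs j)) = mul (f (VTs j)) (f (VTs i))) /\
  (forall i j, nxt i j ->
        mul (mul (f (VTrho i)) (f (VTrho j))) (f (VTrho i))
        = mul (mul (f (VTrho j)) (f (VTrho i))) (f (VTrho j))) /\
  (forall i j, far i j -> mul (f (VTrho i)) (f (VTrho j)) = mul (f (VTrho j)) (f (VTrho i))) /\
  (forall i, mul (f (VTrho i)) (f (VTrho i)) = one) /\
  (forall i j, far i j -> mul (f (VTs i)) (f (VTrho j)) = mul (f (VTrho j)) (f (VTs i))) /\
  (forall i j, nxt i j ->
        mul (mul (f (VTrho i)) (f (VTrho j))) (f (VTs i))
        = mul (mul (f (VTs j)) (f (VTrho i))) (f (VTrho j))).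

Record group := Group {
  gcarrier :> Type;
  gmul : gcarrier -> gcarrier -> gcarrier;
  gone : gcarrier;
  ginv : gcarrier -> gcarrier;
  gmulA : forall x y z, gmul x (gmul y z) = gmul (gmul x y) z;
  gmul1 : forall x, gmul gone x = x;
  gmulV : forall x, gmul (ginv x) x = gone }.

(* A word in the generators (all generators are involutions in VT_n, so every
   element of VT_n is represented by a positive word), evaluated in a monoid. *)
Definition evalw (n : nat) (T : Type) (mul : T -> T -> T) (one : T)
    (f : VTgen n -> T) (w : seq (VTgen n)) : T :=
  foldr mul one (map f w).

(* w represents the identity of VT_n = <gens | VTrel>  iff  it evaluates to the
   identity under every assignment of the generators in every group satisfying
   the defining relations (universal property of the presentation). *)
Definition VTtrivial (n : nat) (w : seq (VTgen n)) : Prop :=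
  forall (G : group) (f : VTgen n -> G),
    VTrel (@gmul G) (gone G) f -> evalw (@gmul G) (gone G) f w = gone G.

Definition loc3 (n : nat) (M : 'M[C]_3) (k : nat) : 'M[C]_(n.+1) :=
  \matrix_(a, b)
    if ((k <= a <= k + 2) && (k <= b <= k + 2))%N
    then M (inord (a - k)) (inord (b - k))
    else ((a == b)%:R : C).

(* The homogeneous 3-local representation with blocks (M, N), on generators:
   delta(s_i) = diag(I_(i-1), M, I_(n-i-1)), delta(rho_i) = diag(I_(i-1), N, I_(n-i-1)). *)
Definition delta (n : nat) (M N : 'M[C]_3) (g : VTgen n) : 'M[C]_(n.+1) :=
  match g with
  | VTs k => loc3 n M (val k)
  | VTrho k => loc3 n N (val k)
  end.

Definition unfaithful (n : nat) (M N : 'M[C]_3) : Prop :=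
  exists w : seq (VTgen n),
    evalw (@mulmx C n.+1 n.+1 n.+1) 1%R (delta M N) w = 1%R /\ ~ VTtrivial w.

Definition equiv_rep (n : nat) (M N M' N' : 'M[C]_3) : Prop :=
  exists P : 'M[C]_(n.+1), P \in unitmx /\
    forall g : VTgen n, delta M N g = invmx P *m delta M' N' g *m P.

Definition mx3 (r1 r2 r3 : seq C) : 'M[C]_3 :=
  \matrix_(i < 3, j < 3) (nth [::] [:: r1; r2; r3] i)`_j.

Definition M1 (e h : C) : 'M[C]_3 :=
  mx3 [:: 1; 0; 0] [:: 0; e; (1 - e ^+ 2) / h] [:: 0; h; - e].
Definition N1 (p : C) : 'M[C]_3 :=
  mx3 [:: 1; 0; 0] [:: 0; 0; p] [:: 0; p^-1; 0].
Definition M2 (e d : C) : 'M[C]_3 :=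
  mx3 [:: - e; (1 - e ^+ 2) / d; 0] [:: d; e; 0] [:: 0; 0; 1].
Definition N2 (k : C) : 'M[C]_3 :=
  mx3 [:: 0; k; 0] [:: k^-1; 0; 0] [:: 0; 0; 1].
Definition M3 (d p : C) : 'M[C]_3 :=
  mx3 [:: 1; 0; 0] [:: d; -1; 2 * p - d * p ^+ 2] [:: 0; 0; 1].
Definition N3 (p : C) : 'M[C]_3 :=
  mx3 [:: 1; 0; 0] [:: p^-1; -1; p] [:: 0; 0; 1].
Definition M4 (h k : C) : 'M[C]_3 :=
  mx3 [:: 1; 2 * k - h * k ^+ 2; 0] [:: 0; -1; 0] [:: 0; h; 1].
Definition N4 (k : C) : 'M[C]_3 :=
  mx3 [:: 1; k; 0] [:: 0; -1; 0] [:: 0; k^-1; 1].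
Definition M5 (b : C) : 'M[C]_3 :=
  mx3 [:: 1; b; 0] [:: 0; -1; 0] [:: 0; 0; 1].
Definition N5 (k : C) : 'M[C]_3 := N2 k.
Definition M6 (b : C) : 'M[C]_3 :=
  mx3 [:: -1; b; 0] [:: 0; 1; 0] [:: 0; 0; 1].
Definition N6 (k : C) : 'M[C]_3 := N2 k.
Definition M7 : 'M[C]_3 := 1%:M.
Definition N7 (p : C) : 'M[C]_3 := N3 p.
Definition M8 : 'M[C]_3 := 1%:M.
Definition N8 (k : C) : 'M[C]_3 := N4 k.
Definition M9 : 'M[C]_3 :=
  mx3 [:: 1; 0; 0] [:: 0; -1; 0] [:: 0; 0; -1].
Definition N9 (p : C) : 'M[C]_3 := N1 p.
Definition M10 : 'M[C]_3 :=
  mx3 [:: 1; 0; 0] [:: 0; -1; 0] [:: 0; 0; 1].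
Definition N10 (p : C) : 'M[C]_3 := N9 p.
Definition M11 : 'M[C]_3 := 1%:M.
Definition N11 (p : C) : 'M[C]_3 := N9 p.
Definition M12 : 'M[C]_3 :=
  mx3 [:: -1; 0; 0] [:: 0; -1; 0] [:: 0; 0; 1].
Definition N12 (k : C) : 'M[C]_3 := N2 k.
Definition M13 : 'M[C]_3 := 1%:M.
Definition N13 (k : C) : 'M[C]_3 := N12 k.
Definition M14 : 'M[C]_3 := 1%:M.
Definition N14 : 'M[C]_3 := 1%:M.

(* Main.v *)
Require Import Defs.
From mathcomp Require Import all_boot all_algebra.
From mathcomp Require Import complex.
From mathcomp Require Import Rstruct.
From mathcomp Require Import all_fingroup zify ring.
Set Implicit Arguments. Unset Strict Implicit. Unset Printing Implicit Defensive.
Import GRing.Theory.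
Section PermGroup.
Variable m : nat.
Definition permG : Defs.group :=
  @Defs.Group {perm 'I_m.+1} (fun x y => (x * y)%g) 1%g (fun x => x^-1)%g
    (@mulgA _) (@mul1g _) (@mulVg _).

Definition T (k : nat) : {perm 'I_m.+1} := tperm (inord k) (inord k.+1).

Lemma inord_eq (a b : nat) : (a <= m)%N -> (b <= m)%N ->
  (inord a == inord b :> 'I_m.+1) = (a == b).
Proof.
move=> ha hb; apply/eqP/eqP => [h|->//].
by have := congr1 (@nat_of_ord _) h; rewrite !inordK.
Qed.

Lemma T2 k : (T k * T k = 1)%g.
Proof. exact: tperm2. Qed.

Lemma Tfix k x : (k.+1 <= m)%N -> (x <= m)%N -> x != k -> x != k.+1 ->
  T k (inord x) = inord x.
Proof.
move=> hk hx h1 h2; rewrite /T tpermD // inord_eq //; lia.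
Qed.

Lemma TL k : (k.+1 <= m)%N -> T k (inord k) = inord k.+1.
Proof. by move=> _; rewrite /T tpermL. Qed.
Lemma TR k : (k.+1 <= m)%N -> T k (inord k.+1) = inord k.
Proof. by move=> _; rewrite /T tpermR. Qed.

Lemma Tfar i j : (i.+1 <= m)%N -> (j.+1 <= m)%N -> ((i + 2 <= j) || (j + 2 <= i))%N ->
  (T i * T j = T j * T i)%g.
Proof.
move=> hi hj hf; rewrite conjgC; congr (_ * _)%g.
rewrite {1}/T tpermJ Tfix ?Tfix //; (try lia); apply/negP => /eqP; lia.
Qed.

Lemma Tbraid i : (i.+2 <= m)%N ->
  (T i * T i.+1 * T i = T i.+1 * T i * T i.+1)%g.
Proof.
move=> hi.
have e1 : (T i * T i.+1 * T i = (T i.+1) ^ (T i))%g by rewrite conjgE /T tpermV mulgA.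
have e2 : (T i.+1 * T i * T i.+1 = (T i) ^ (T i.+1))%g by rewrite conjgE /T tpermV mulgA.
rewrite e1 e2 /T !tpermJ -/(T i) -/(T i.+1).
rewrite TL; last lia. rewrite TR; last lia.
rewrite Tfix; [|lia|lia|apply/negP=>/eqP; lia|apply/negP=>/eqP; lia].
rewrite Tfix; [|lia|lia|apply/negP=>/eqP; lia|apply/negP=>/eqP; lia].
done.
Qed.

Definition fT (g : VTgen m.+1) : permG :=
  match g with VTs k => T (val k) | VTrho k => T (val k) end.

Lemma fT_rel : VTrel (@gmul permG) (gone permG) fT.
Proof.
have h2 x : (x.+1 < m)%N -> (x.+2 <= m)%N by [].
have hk (k : 'I_m) : (k.+1 <= m)%N by exact: (ltn_ord k).
rewrite /VTrel /=; split; [|split; [|split; [|split; [|split; [|split]]]]].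
- by move=> i; exact: T2.
- by move=> i j; apply: Tfar.
- move=> i j /eqP hj; have := ltn_ord j; rewrite hj => hj'; apply: Tbraid; exact: h2.
- by move=> i j; apply: Tfar.
- by move=> i; exact: T2.
- by move=> i j; apply: Tfar.
- move=> i j /eqP hj; have := ltn_ord j; rewrite hj => hj'; apply: Tbraid; exact: h2.
Qed.

Lemma nontriv_perm (w : seq (VTgen m.+1)) :
  evalw (@gmul permG) (gone permG) fT w <> gone permG -> ~ VTtrivial w.
Proof. by move=> h ht; apply: h; apply: ht; exact: fT_rel. Qed.
End PermGroup.


Definition boolG : Defs.group :=
  @Defs.Group bool addb false id addbA (fun x => erefl) addbb.

Definition fB (m : nat) (g : VTgen m) : boolG :=
  match g with VTs _ => true | VTrho _ => false end.

Lemma fB_rel m : VTrel (@gmul boolG) (gone boolG) (@fB m).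
Proof. by rewrite /VTrel /=; do !split. Qed.

Lemma nontriv_bool m (w : seq (VTgen m)) :
  evalw (@gmul boolG) (gone boolG) (@fB m) w = true -> ~ VTtrivial w.
Proof. by move=> h ht; move: (ht boolG (@fB m) (@fB_rel m)); rewrite h. Qed.

Section Words.
Variable n' : nat.
Definition s0 : VTgen n'.+4 := @VTs n'.+4 (@Ordinal n'.+3 0 isT).
Definition s1 : VTgen n'.+4 := @VTs n'.+4 (@Ordinal n'.+3 1 isT).
Definition r0 : VTgen n'.+4 := @VTrho n'.+4 (@Ordinal n'.+3 0 isT).
Definition w_diag := [:: s1; s0; s1; s0].
Definition w_A := [:: r0; s0; r0; s1; r0; s0; r0; s1].
Definition w_B := [:: r0; s1; r0; s1; r0; s1; r0; s1].

Lemma pt (x : nat) : (x <= n'.+3)%N -> True. Proof. by []. Qed.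

Ltac evT := rewrite ?permM ?TL ?TR ?Tfix //.

Lemma nt_diag : ~ VTtrivial w_diag.
Proof.
apply: nontriv_perm => /= /(congr1 (fun p : {perm _} => p (inord 0))).
rewrite /evalw /w_diag /s0 /s1 /= mulg1 !permM perm1.
rewrite Tfix // TL // TL // Tfix // => /(congr1 (@nat_of_ord _)).
by rewrite !inordK.
Qed.

Ltac evalT := repeat (first [rewrite TL // | rewrite TR // | rewrite Tfix //]).

Lemma nt_A : ~ VTtrivial w_A.
Proof.
apply: nontriv_perm => /= /(congr1 (fun p : {perm _} => p (inord 0))).
rewrite /evalw /w_A /s0 /s1 /r0 /= mulg1 !permM perm1.
evalT => /(congr1 (@nat_of_ord _)); by rewrite !inordK.
Qed.

Lemma nt_B : ~ VTtrivial w_B.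
Proof.
apply: nontriv_perm => /= /(congr1 (fun p : {perm _} => p (inord 0))).
rewrite /evalw /w_B /s0 /s1 /r0 /= mulg1 !permM perm1.
evalT => /(congr1 (@nat_of_ord _)); by rewrite !inordK.
Qed.

Definition w_s := [:: s0].
Definition w_rs := [:: r0; s0].
Lemma nt_s : ~ VTtrivial w_s. Proof. exact: nontriv_bool. Qed.
Lemma nt_rs : ~ VTtrivial w_rs. Proof. exact: nontriv_bool. Qed.
End Words.


Local Open Scope ring_scope.

Definition mxf (f : nat -> nat -> C) : 'M[C]_4 := \matrix_(i < 4, j < 4) f i j.
Definition mulf (f g : nat -> nat -> C) (i j : nat) : C :=
  f i 0%N * g 0%N j + f i 1%N * g 1%N j + f i 2%N * g 2%N j + f i 3%N * g 3%N j.

Lemma mxf_mul f g : mxf f *m mxf g = mxf (mulf f g).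
Proof.
apply/matrixP => i j; rewrite !mxE !big_ord_recr big_ord0 /= add0r !mxE /mulf.
by [].
Qed.

Lemma mxf_eq f g : (forall i j, (i < 4)%N -> (j < 4)%N -> f i j = g i j) -> mxf f = mxf g.
Proof. by move=> h; apply/matrixP => i j; rewrite !mxE h. Qed.

Definition tbl (rows : seq (seq C)) (i j : nat) : C := nth 0 (nth [::] rows i) j.

Lemma loc3_0 (a b c d e f g h k : C) :
  loc3 3 (mx3 [:: a; b; c] [:: d; e; f] [:: g; h; k]) 0 =
  mxf (tbl [:: [:: a; b; c; 0]; [:: d; e; f; 0]; [:: g; h; k; 0]; [:: 0; 0; 0; 1]]).
Proof.
apply/matrixP; case=> [[|[|[|[|?]]]] ?] //; case=> [[|[|[|[|?]]]] ?] //;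
  rewrite /loc3 !mxE /= ?inordK //.
Qed.

Lemma loc3_1 (a b c d e f g h k : C) :
  loc3 3 (mx3 [:: a; b; c] [:: d; e; f] [:: g; h; k]) 1 =
  mxf (tbl [:: [:: 1; 0; 0; 0]; [:: 0; a; b; c]; [:: 0; d; e; f]; [:: 0; g; h; k]]).
Proof.
apply/matrixP; case=> [[|[|[|[|?]]]] ?] //; case=> [[|[|[|[|?]]]] ?] //;
  rewrite /loc3 !mxE /= ?inordK //.
Qed.

Ltac mxcomp := rewrite ?loc3_0 ?loc3_1 ?mxf_mul; apply: mxf_eq;
  case=> [|[|[|[|?]]]] //; case=> [|[|[|[|?]]]] //= _ _; rewrite /mulf /tbl /=.

Section Emb.
Variable n0 : nat.
Definition E4 (X : 'M[C]_4) : 'M[C]_((n0.+4).+1) := block_mx X 0 0 1%:M.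

Lemma E4_mul X Y : E4 X *m E4 Y = E4 (X *m Y).
Proof.
have h := @mulmx_block C 4 n0.+1 4 n0.+1 4 n0.+1 X 0 0 1%:M Y 0 0 1%:M.
rewrite !mulmx0 !mul0mx !addr0 !add0r mul1mx in h.
exact: h.
Qed.

Lemma E4_inj X Y : E4 X = E4 Y -> X = Y.
Proof. by move=> h; have [] := @eq_block_mx C 4 n0.+1 4 n0.+1 X 0 0 1%:M Y 0 0 1%:M h. Qed.

Lemma loc3_E4 A k : (k <= 1)%N -> loc3 n0.+4 A k = E4 (loc3 3 A k).
Proof.
move=> hk; apply/matrixP => a b; rewrite /E4.
case: (@splitP 4 n0.+1 a) => a' ha.
- have -> : a = lshift n0.+1 a' by apply: val_inj.
  case: (@splitP 4 n0.+1 b) => b' hb.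
  + have -> : b = lshift n0.+1 b' by apply: val_inj.
    by rewrite (block_mxEul (loc3 3 A k) 0 0 (1%:M : 'M_(n0.+1))) /loc3 !mxE.
  + have -> : b = rshift 4 b' by apply: val_inj.
    rewrite (block_mxEur (loc3 3 A k) 0 0 (1%:M : 'M_(n0.+1))) /loc3 !mxE /=.
    have -> : (k <= 4 + b' <= k + 2)%N = false by apply/negP; lia.
    rewrite andbF; case: eqP => // /(congr1 val) /= h; exfalso; have := ltn_ord a'; lia.
- have -> : a = rshift 4 a' by apply: val_inj.
  case: (@splitP 4 n0.+1 b) => b' hb.
  + have -> : b = lshift n0.+1 b' by apply: val_inj.
    rewrite (block_mxEdl (loc3 3 A k) 0 0 (1%:M : 'M_(n0.+1))) /loc3 !mxE /=.
    have -> : (k <= 4 + a' <= k + 2)%N = false by apply/negP; lia.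
    rewrite andFb; case: eqP => // /(congr1 val) /= h; exfalso; have := ltn_ord b'; lia.
  + have -> : b = rshift 4 b' by apply: val_inj.
    rewrite (block_mxEdr (loc3 3 A k) 0 0 (1%:M : 'M_(n0.+1))) /loc3 !mxE /=.
    have -> : (k <= 4 + a' <= k + 2)%N = false by apply/negP; lia.
    by rewrite andFb (inj_eq (@rshift_inj 4 n0.+1)).
Qed.

Lemma loc3_E4_0 A : loc3 n0.+4 A 0 = E4 (loc3 3 A 0).
Proof. exact: loc3_E4. Qed.
Lemma loc3_E4_1 A : loc3 n0.+4 A 1 = E4 (loc3 3 A 1).
Proof. exact: loc3_E4. Qed.

Lemma E4_1 : E4 1%:M = 1%:M.
Proof. by rewrite /E4 (@scalar_mx_block C 4 n0.+1 1). Qed.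
End Emb.

Local Open Scope ring_scope.

Lemma evalw_cons (T : Type) m (mul : T -> T -> T) one (f : VTgen m -> T) g w :
  evalw mul one f (g :: w) = mul (f g) (evalw mul one f w).
Proof. by []. Qed.

Section Main.
Variable n' : nat.
Notation MM := 'M[C]_((n'.+4).+1).

Lemma evalw_conj (D D' : VTgen n'.+4 -> MM) (P : MM) :
  P \in unitmx -> (forall g, D g = invmx P *m D' g *m P) ->
  forall w, evalw mulmx 1%R D w = invmx P *m evalw mulmx 1%R D' w *m P.
Proof.
move=> hP H; elim=> [|g w IH]; first by rewrite /evalw /= mulmx1 mulVmx.
by rewrite !evalw_cons IH H !mulmxA (mulmxK hP).
Qed.

Lemma transfer_eq (M N M' N' : 'M[C]_3) (u v : seq (VTgen n'.+4)) :
  equiv_rep n'.+4 M N M' N' ->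
  evalw mulmx 1%R (delta M' N') u = evalw mulmx 1%R (delta M' N') v ->
  evalw mulmx 1%R (delta M N) u = evalw mulmx 1%R (delta M N) v.
Proof.
case=> P [hP H] e.
by rewrite (evalw_conj hP H u) (evalw_conj hP H v) e.
Qed.


Lemma evalw_nil (T : Type) m (mul : T -> T -> T) one (f : VTgen m -> T) :
  evalw mul one f [::] = one.
Proof. by []. Qed.

Section Cases.
Variables M N M' N' : 'M[C]_3.
Hypothesis Hrep : VTrel (@mulmx C (n'.+4).+1 (n'.+4).+1 (n'.+4).+1) 1%R (delta M N).
Hypothesis He : equiv_rep n'.+4 M N M' N'.
Let D := @delta n'.+4 M N.
Let D' := @delta n'.+4 M' N'.
Let ev := @evalw n'.+4 _ (@mulmx C (n'.+4).+1 (n'.+4).+1 (n'.+4).+1) 1%R.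

Lemma Ds2 i : D (VTs i) *m D (VTs i) = 1%R.
Proof. by case: Hrep. Qed.
Lemma Dr2 i : D (VTrho i) *m D (VTrho i) = 1%R.
Proof. by case: Hrep => _ [_ [_ [_ [h _]]]]. Qed.

Lemma case_A :
  ev D' [:: r0 n'; s0 n'; r0 n'; s1 n'] = ev D' [:: s1 n'; r0 n'; s0 n'; r0 n'] ->
  unfaithful n'.+4 M N.
Proof.
move=> Hc; exists (w_A n'); split; last exact: nt_A.
have := transfer_eq He Hc; rewrite !evalw_cons evalw_nil !mulmx1 -/D => hc.
have ha : D (r0 n') *m D (r0 n') = 1%R := Dr2 _.
have hb : D (s0 n') *m D (s0 n') = 1%R := Ds2 _.
have hc1 : D (s1 n') *m D (s1 n') = 1%R := Ds2 _.
rewrite /w_A ?evalw_cons ?evalw_nil ?mulmx1 -/D hc.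
by rewrite (mulmxA (D (s1 n')) (D (s1 n'))) hc1 mul1mx (mulmxA (D (r0 n')) (D (r0 n'))) ha mul1mx
  (mulmxA (D (s0 n')) (D (s0 n'))) hb mul1mx ha.
Qed.

Lemma case_B :
  ev D' [:: r0 n'; s1 n'; r0 n'; s1 n'] = ev D' [:: s1 n'; r0 n'; s1 n'; r0 n'] ->
  unfaithful n'.+4 M N.
Proof.
move=> Hc; exists (w_B n'); split; last exact: nt_B.
have := transfer_eq He Hc; rewrite !evalw_cons evalw_nil !mulmx1 -/D => hc.
have ha : D (r0 n') *m D (r0 n') = 1%R := Dr2 _.
have hc1 : D (s1 n') *m D (s1 n') = 1%R := Ds2 _.
rewrite /w_B ?evalw_cons ?evalw_nil ?mulmx1 -/D hc.
by rewrite (mulmxA (D (s1 n')) (D (s1 n'))) hc1 mul1mx (mulmxA (D (r0 n')) (D (r0 n'))) ha mul1mx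
  (mulmxA (D (s1 n')) (D (s1 n'))) hc1 mul1mx ha.
Qed.

Lemma case_diag :
  ev D' [:: s1 n'; s0 n'] = ev D' [:: s0 n'; s1 n'] ->
  unfaithful n'.+4 M N.
Proof.
move=> Hc; exists (w_diag n'); split; last exact: nt_diag.
have := transfer_eq He Hc; rewrite !evalw_cons evalw_nil !mulmx1 -/D => hc.
have hb : D (s0 n') *m D (s0 n') = 1%R := Ds2 _.
have hc1 : D (s1 n') *m D (s1 n') = 1%R := Ds2 _.
rewrite /w_diag ?evalw_cons ?evalw_nil ?mulmx1 -/D hc.
by rewrite (mulmxA (D (s0 n')) (D (s0 n'))) hb mul1mx hc1.
Qed.

Lemma case_eq : D' (s0 n') = D' (r0 n') -> unfaithful n'.+4 M N.
Proof.
move=> h; exists (w_rs n'); split; last exact: nt_rs.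
have e : D (s0 n') = D (r0 n').
  by case: He => P [hP H]; rewrite /D H -/D' h -H.
by rewrite /w_rs ?evalw_cons ?evalw_nil ?mulmx1 -/D e Dr2.
Qed.

Lemma case_one : D' (s0 n') = 1%R -> unfaithful n'.+4 M N.
Proof.
move=> h; exists (w_s n'); split; last exact: nt_s.
case: He => P [hP H].
by rewrite /w_s ?evalw_cons ?evalw_nil ?mulmx1 H -/D' h mulmx1 mulVmx.
Qed.
End Cases.
End Main.

Lemma mulmx1R k (A : 'M[C]_(k.+1)) : A *m 1%R = A.
Proof. exact: mulmx1. Qed.

Section Concrete.
Variable n' : nat.
Let ev := @evalw n'.+4 _ (@mulmx C (n'.+4).+1 (n'.+4).+1 (n'.+4).+1) 1%R.

Lemma dS0 A B : delta A B (s0 n') = loc3 n'.+4 A 0. Proof. by []. Qed.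
Lemma dS1 A B : delta A B (s1 n') = loc3 n'.+4 A 1. Proof. by []. Qed.
Lemma dR0 A B : delta A B (r0 n') = loc3 n'.+4 B 0. Proof. by []. Qed.

Ltac prep := rewrite /ev !evalw_cons evalw_nil !mulmx1R ?dS0 ?dS1 ?dR0 ?loc3_E4_0 ?loc3_E4_1 !E4_mul; apply: f_equal.

Lemma comm_1 h p : h != 0 -> p != 0 ->
  ev (delta (M1 1 h) (N1 p)) [:: r0 n'; s0 n'; r0 n'; s1 n'] =
  ev (delta (M1 1 h) (N1 p)) [:: s1 n'; r0 n'; s0 n'; r0 n'].
Proof.
move=> hh hp. prep. rewrite /M1 /N1. mxcomp. all: (field; by rewrite ?hh ?hp).
Qed.

Lemma comm_5 b k : k != 0 ->
  ev (delta (M5 b) (N5 k)) [:: r0 n'; s0 n'; r0 n'; s1 n'] =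
  ev (delta (M5 b) (N5 k)) [:: s1 n'; r0 n'; s0 n'; r0 n'].
Proof.
move=> hk. prep. rewrite /M5 /N5 /N2. mxcomp. all: (field; by rewrite ?hk).
Qed.

Lemma comm_2 d k : d != 0 -> k != 0 ->
  ev (delta (M2 1 d) (N2 k)) [:: r0 n'; s1 n'; r0 n'; s1 n'] =
  ev (delta (M2 1 d) (N2 k)) [:: s1 n'; r0 n'; s1 n'; r0 n'].
Proof.
move=> hd hk. prep. rewrite /M2 /N2. mxcomp. all: (field; by rewrite ?hk ?hd).
Qed.

Lemma comm_6 b k : k != 0 ->
  ev (delta (M6 b) (N6 k)) [:: r0 n'; s1 n'; r0 n'; s1 n'] =
  ev (delta (M6 b) (N6 k)) [:: s1 n'; r0 n'; s1 n'; r0 n'].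
Proof.
move=> hk. prep. rewrite /M6 /N6 /N2. mxcomp. all: (field; by rewrite ?hk).
Qed.

Lemma comm_diag (A B : 'M[C]_3) a b c :
  A = mx3 [:: a; 0; 0] [:: 0; b; 0] [:: 0; 0; c] ->
  ev (delta A B) [:: s1 n'; s0 n'] = ev (delta A B) [:: s0 n'; s1 n'].
Proof.
move=> ->. prep. mxcomp. all: ring.
Qed.

Lemma one_s0 (B : 'M[C]_3) : delta 1%:M B (s0 n') = 1%R.
Proof.
rewrite dS0 loc3_E4_0.
have -> : loc3 3 1%:M 0 = 1%:M.
  apply/matrixP; case=> [[|[|[|[|?]]]] ?] //; case=> [[|[|[|[|?]]]] ?] //;
  rewrite /loc3 !mxE /= -?(inj_eq val_inj) /= ?inordK //.
by rewrite E4_1.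
Qed.

Lemma eq_3 p : p != 0 -> delta (M3 p^-1 p) (N3 p) (s0 n') = delta (M3 p^-1 p) (N3 p) (r0 n').
Proof.
move=> hp; rewrite /delta /= /M3 /N3.
have -> : 2 * p - p^-1 * p ^+ 2 = p by field.
by [].
Qed.

Lemma eq_4 k : k != 0 -> delta (M4 k^-1 k) (N4 k) (s0 n') = delta (M4 k^-1 k) (N4 k) (r0 n').
Proof.
move=> hk; rewrite /delta /= /M4 /N4.
have -> : 2 * k - k^-1 * k ^+ 2 = k by field.
by [].
Qed.
End Concrete.

Lemma main n' (M N : 'M[C]_3)
  (Hrep : VTrel (@mulmx C (n'.+4).+1 (n'.+4).+1 (n'.+4).+1) 1%R (delta M N)) :
  (forall (e h p : C), h != 0 -> p != 0 ->
     equiv_rep n'.+4 M N (M1 e h) (N1 p) -> e = 1 -> unfaithful n'.+4 M N) /\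
  (forall (e d k : C), d != 0 -> k != 0 ->
     equiv_rep n'.+4 M N (M2 e d) (N2 k) -> e = 1 -> unfaithful n'.+4 M N) /\
  (forall (d p : C), p != 0 ->
     equiv_rep n'.+4 M N (M3 d p) (N3 p) -> d = p^-1 -> unfaithful n'.+4 M N) /\
  (forall (h k : C), k != 0 ->
     equiv_rep n'.+4 M N (M4 h k) (N4 k) -> h = k^-1 -> unfaithful n'.+4 M N) /\
  ((exists (b k : C), k != 0 /\ equiv_rep n'.+4 M N (M5 b) (N5 k)) \/
   (exists (b k : C), k != 0 /\ equiv_rep n'.+4 M N (M6 b) (N6 k)) \/
   (exists p : C, p != 0 /\ equiv_rep n'.+4 M N M7 (N7 p)) \/
   (exists k : C, k != 0 /\ equiv_rep n'.+4 M N M8 (N8 k)) \/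
   (exists p : C, p != 0 /\ equiv_rep n'.+4 M N M9 (N9 p)) \/
   (exists p : C, p != 0 /\ equiv_rep n'.+4 M N M10 (N10 p)) \/
   (exists p : C, p != 0 /\ equiv_rep n'.+4 M N M11 (N11 p)) \/
   (exists k : C, k != 0 /\ equiv_rep n'.+4 M N M12 (N12 k)) \/
   (exists k : C, k != 0 /\ equiv_rep n'.+4 M N M13 (N13 k)) \/
   equiv_rep n'.+4 M N M14 N14 ->
   unfaithful n'.+4 M N).
Proof.
split; [|split; [|split; [|split]]].
- move=> e h p hh hp He he; subst e; apply: (case_A Hrep He); exact: comm_1.
- move=> e d k hd hk He he; subst e; apply: (case_B Hrep He); exact: comm_2.
- move=> d p hp He hd; subst d; apply: (case_eq Hrep He); exact: eq_3.
- move=> h k hk He hh; subst h; apply: (case_eq Hrep He); exact: eq_4.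
- case=> [[b [k [hk He]]] | [[b [k [hk He]]] | [[p [hp He]] | [[k [hk He]] |
    [[p [hp He]] | [[p [hp He]] | [[p [hp He]] | [[k [hk He]] | [[k [hk He]] | He]]]]]]]]].
  + apply: (case_A Hrep He); exact: comm_5.
  + apply: (case_B Hrep He); exact: comm_6.
  + apply: (case_one He); exact: one_s0.
  + apply: (case_one He); exact: one_s0.
  + apply: (case_diag Hrep He); exact: (@comm_diag n' M9 (N9 p) 1 (-1) (-1)).
  + apply: (case_diag Hrep He); exact: (@comm_diag n' M10 (N10 p) 1 (-1) 1).
  + apply: (case_one He); exact: one_s0.
  + apply: (case_diag Hrep He); exact: (@comm_diag n' M12 (N12 k) (-1) (-1) 1).
  + apply: (case_one He); exact: one_s0.
  + apply: (case_one He); exact: one_s0.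
Qed.

Unset Implicit Arguments.

Theorem theorem4p5 (n : nat) (Hn : (4 <= n)%N) (M N : 'M[C]_3)
  (Hrep : VTrel (@mulmx C n.+1 n.+1 n.+1) 1%R (delta M N)) :
  (* (1) *)
  (forall (e h p : C), h != 0 -> p != 0 ->
     equiv_rep n M N (M1 e h) (N1 p) -> e = 1 -> unfaithful n M N) /\
  (* (2) *)
  (forall (e d k : C), d != 0 -> k != 0 ->
     equiv_rep n M N (M2 e d) (N2 k) -> e = 1 -> unfaithful n M N) /\
  (* (3) *)
  (forall (d p : C), p != 0 ->
     equiv_rep n M N (M3 d p) (N3 p) -> d = p^-1 -> unfaithful n M N) /\
  (* (4) *)
  (forall (h k : C), k != 0 ->
     equiv_rep n M N (M4 h k) (N4 k) -> h = k^-1 -> unfaithful n M N) /\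
  (* (5) *)
  ((exists (b k : C), k != 0 /\ equiv_rep n M N (M5 b) (N5 k)) \/
   (exists (b k : C), k != 0 /\ equiv_rep n M N (M6 b) (N6 k)) \/
   (exists p : C, p != 0 /\ equiv_rep n M N M7 (N7 p)) \/
   (exists k : C, k != 0 /\ equiv_rep n M N M8 (N8 k)) \/
   (exists p : C, p != 0 /\ equiv_rep n M N M9 (N9 p)) \/
   (exists p : C, p != 0 /\ equiv_rep n M N M10 (N10 p)) \/
   (exists p : C, p != 0 /\ equiv_rep n M N M11 (N11 p)) \/
   (exists k : C, k != 0 /\ equiv_rep n M N M12 (N12 k)) \/
   (exists k : C, k != 0 /\ equiv_rep n M N M13 (N13 k)) \/
   equiv_rep n M N M14 N14 ->
   unfaithful n M N).
Proof.
move: Hn M N Hrep; case: n => [|[|[|[|n']]]] // _ M N Hrep.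
exact: main.
Qed.
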